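(* Consider three sets of variables $v^\alpha,u^\alpha,w^\alpha$ ($1\le\alpha\le N$) and rational Miura transformations $v^\alpha\mapsto u^\alpha(v^*_*;\varepsilon)$ and $u^\alpha\mapsto w^\alpha(u^*_*;\varepsilon)$ such that $$\frac{\partial u^\alpha(v^*_*;\varepsilon)}{\partial v^1}=\delta^{\alpha,1},\quad\frac{\partial u^\alpha(v^*_*;\varepsilon)^{\mathrm{pol}}}{\partial v^1_x}=0,\quad\frac{\partial w^\alpha(u^*_*;\varepsilon)}{\partial u^1}=\delta^{\alpha,1},\quad\frac{\partial w^\alpha(u^*_*;\varepsilon)^{\mathrm{pol}}}{\partial u^1_x}=0.$$ Then the polynomial part of the composition $v^\alpha\mapsto w^\alpha(u^*_*(v^*_*;\varepsilon);\varepsilon)$ is equal to the composition of the polynomial parts $v^\alpha\mapsto u^\alpha(v^*_*;\varepsilon)^{\mathrm{pol}}$ and $u^\alpha\mapsto w^\alpha(u^*_*;\varepsilon)^{\mathrm{pol}}$.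
   Context: For variables $v^\alpha_k$ ($v^\alpha=v^\alpha_0$, $v^\alpha_x=v^\alpha_1$): $\mathcal A_v$ = polynomials in $v^\alpha_k$, $k>0$, over $\mathbb C[[v^1,\dots,v^N]]$, graded by $\deg v^\alpha_k=k$; $\deg\varepsilon=-1$. $\mathcal A^{\mathrm{rt},[d]}_v$: span of $\sum_{i\ge m}\frac{P_i(v^*_* )}{(v^1_x)^i}$ with $m\in\mathbb Z$, $P_i\in\mathcal A^{[d+i]}_v$, $\partial P_i/\partial v^1_x=0$ (interpreted as formal power series in $v^\alpha_n-\delta^{\alpha,1}\delta_{n,1}$); $\mathcal A^{\mathrm{rt}}_v=\bigoplus_d\mathcal A^{\mathrm{rt},[d]}_v$; polynomial part $\big(\sum_{i\ge m}P_i/(v^1_x)^i\big)^{\mathrm{pol}}=\sum_{i=m}^0P_i/(v^1_x)^i\in\mathcal A_v$; $\widehat{\mathcal A}^{\mathrm{rt}}_v=\mathcal A^{\mathrm{rt}}_v[[\varepsilon]]$, polynomial part taken coefficientwise. Tame: there is $C$ such that no $P_i$ depends on $v^\alpha_k$ with $k>C$ (for each $\varepsilon$-coefficient); $\widehat{\mathcal A}^{\mathrm{rt},\mathrm t,[d]}_v$ = tame elements of degree $d$. A rational Miura transformation is $v^\alpha\mapsto v^\alpha+\varepsilon f^\alpha(v^*_*;\varepsilon)$, $f^\alpha\in\widehat{\mathcal A}^{\mathrm{rt},\mathrm t,[1]}_v$; these form a group (composition is by substitution), and the polynomial part of a rational Miura transformation is an ordinary Miura transformation. The same notations apply to $u$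 and $w$. *)

(* Defs.v *)
From HB Require Import structures.
From mathcomp Require Import all_boot all_order all_algebra.
From mathcomp Require Import boolp classical_sets functions cardinality fsbigop reals.
From mathcomp Require Export complex.

Set Implicit Arguments.
Unset Strict Implicit.
Unset Printing Implicit Defensive.
Import Order.TTheory GRing.Theory Num.Theory.
Local Open Scope ring_scope.
Local Open Scope classical_set_scope.

(* N = n.+1 dependent variables v^alpha, alpha : 'I_n.+1 (ord0 is v^1).     *)
(* A jet variable v^alpha_k is a pair (alpha, k) : var.                       *)
(* An element  sum_{i>=m} P_i/(v^1_x)^i  is expanded uniquely into monomials *)
(*   prod_{(alpha,k)} (v^alpha_k)^{e(alpha,k)},                               *)
(* where e(alpha,k) >= 0 for (alpha,k) <> (1,1) and the exponent of v^1_x    *)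
(* is an arbitrary integer (= -i); the v^alpha (k = 0) exponents give the    *)
(* power-series part over C[[v^1..v^N]].  An element of \hat A^{rt}_v is      *)
(* a coefficient function  ser : nat (power of eps) -> mon -> K.             *)

Section MiuraModel.
Variable K : fieldType.
Variable n : nat.

Definition var := ('I_n.+1 * nat)%type.
Definition v1 : var := (ord0, 0%N).
Definition v1x : var := (ord0, 1%N).
Definition nextvar (x : var) : var := (x.1, x.2.+1).

Definition mon := var -> int.
Definition mon0 : mon := fun _ => 0.
Definition mon_single (y : var) (z : int) : mon := fun x => if x == y then z else 0.
Definition mon_add (a b : mon) : mon := fun x => a x + b x.
Definition mon_sub (a b : mon) : mon := fun x => a x - b x.

Definition admissible (m : mon) : Prop :=
  finite_set [set x | m x != 0] /\ (forall x, x != v1x -> 0 <= m x).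

Definition weight (m : mon) : int := \sum_(x \in [set: var]) (x.2%:Z * m x).

Definition ser := nat -> mon -> K.

Definition ser_zero : ser := fun _ _ => 0.
Definition ser_one : ser := fun j m => ((j == 0)%N && (m == mon0))%:R.
Definition ser_mono (x : var) (z : int) : ser :=
  fun j m => ((j == 0)%N && (m == mon_single x z))%:R.
Definition ser_sub (a b : ser) : ser := fun j m => a j m - b j m.

Definition ser_mul (a b : ser) : ser := fun j m =>
  \sum_(p \in [set p : nat * mon | (p.1 <= j)%N])
     (a p.1 p.2 * b (j - p.1)%N (mon_sub m p.2)).

Definition ser_pow (a : ser) (k : nat) : ser := iter k (ser_mul a) ser_one.

(* total x-derivative: d/dx v^alpha_k = v^alpha_{k+1} *)
Definition ser_D (a : ser) : ser := fun j m =>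
  \sum_(x \in [set: var])
     ((m x + 1)%:~R * a j (mon_add m (mon_sub (mon_single x 1) (mon_single (nextvar x) 1)))).

Definition dpart (x : var) (a : ser) : ser := fun j m =>
  (m x + 1)%:~R * a j (mon_add m (mon_single x 1)).

(* inverse of an element a = v^1_x + O(eps):
   1/(v^1_x + h) = sum_k (-1)^k h^k (v^1_x)^(-k-1), eps-adically convergent *)
Definition inv_v1x (a : ser) : ser := fun j m =>
  \sum_(k < j.+1)
     ((-1) ^+ k * ser_mul (ser_mono v1x (- (k.+1)%:Z))
                          (ser_pow (ser_sub a (ser_mono v1x 1)) k) j m).

Definition ser_ipow (a : ser) (z : int) : ser :=
  match z with
  | Posz k => ser_pow a k
  | Negz k => ser_pow (inv_v1x a) k.+1
  end.

Definition pol (a : ser) : ser := fun j m => if 0 <= m v1x then a j m else 0.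

(* a is in \hat A^{rt,[d]} (deg eps = -1): eps^j-coefficient has degree d+j *)
Definition in_Art (d : int) (a : ser) : Prop :=
  forall j m, a j m != 0 -> admissible m /\ weight m = d + j%:Z.

Definition tame (a : ser) : Prop :=
  forall j, exists C : nat, forall m, a j m != 0 ->
    forall x : var, x != v1x -> (C < x.2)%N -> m x = 0.

(* rational Miura transformation v^alpha |-> u^alpha = v^alpha + eps f^alpha,
   f^alpha in \hat A^{rt,t,[1]}; u alpha is the element u^alpha(v;eps) *)
Definition rat_miura (u : 'I_n.+1 -> ser) : Prop :=
  forall alpha,
    [/\ (forall m, u alpha 0%N m = (m == mon_single (alpha, 0%N) 1)%:R),
        in_Art 1 (fun j => u alpha j.+1) & tame (fun j => u alpha j.+1)].

(* image of the jet variable v^alpha_k under v^beta |-> u^beta : d^k u^alpha *)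
Definition img (u : 'I_n.+1 -> ser) (x : var) : ser := iter x.2 ser_D (u x.1).

Definition img_mon (u : 'I_n.+1 -> ser) (e : mon) : ser :=
  \big[ser_mul/ser_one]_(x \in [set: var]) ser_ipow (img u x) (e x).

Definition subst (u : 'I_n.+1 -> ser) (g : ser) : ser := fun j m =>
  \sum_(p \in [set p : nat * mon | (p.1 <= j)%N])
     (g p.1 p.2 * img_mon u p.2 (j - p.1)%N m).

Definition miura_comp (u w : 'I_n.+1 -> ser) : 'I_n.+1 -> ser :=
  fun alpha => subst u (w alpha).

Definition miura_pol (u : 'I_n.+1 -> ser) : 'I_n.+1 -> ser :=
  fun alpha => pol (u alpha).

Definition kdelta1 (alpha : 'I_n.+1) : ser :=
  if alpha == ord0 then ser_one else ser_zero.

End MiuraModel.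

(* Main.v *)
Require Import Defs.
From HB Require Import structures.
From mathcomp Require Import all_boot all_order all_algebra.
From mathcomp Require Import boolp classical_sets functions cardinality fsbigop reals complex.
From mathcomp Require Import zify.
Set Implicit Arguments.
Unset Strict Implicit.
Unset Printing Implicit Defensive.
Import Order.TTheory GRing.Theory Num.Theory.
Local Open Scope ring_scope.
Local Open Scope classical_set_scope.

Section Aux.
Variable K : numFieldType.
Variable n : nat.
Local Notation ser := (ser K n).
Local Notation mon := (mon n).
Local Notation var := (var n).
Local Notation X1 := (v1x n).

Lemma fsum_nz (T : choiceType) (A : set T) (F : T -> K) :
  \sum_(i \in A) F i != 0 -> exists i, A i /\ F i != 0.
Proof.
move=> H; apply: contrapT => H'; move/eqP: H; apply; apply: fsbig1 => i Ai.
apply/eqP; apply: contrapT => Fi; apply: H'; exists i; split => //; exact/negP.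
Qed.

Definition NPz (a : ser) (z : int) := forall j m, a j m != 0 -> m X1 <= z.

Lemma NPz_le a z z' : NPz a z -> z <= z' -> NPz a z'.
Proof. by move=> H le j m /H h; apply: le_trans le. Qed.

Lemma NPz_one : NPz (@ser_one K n) 0.
Proof.
move=> j m; rewrite /ser_one; case: (j == 0)%N; last by rewrite /= eqxx.
case: (m =P @mon0 n) => [-> _|]; last by rewrite eqxx.
by rewrite /mon0.
Qed.

Lemma ser_mul_nz (a b : ser) j m : ser_mul a b j m != 0 ->
  exists p : nat * mon, (p.1 <= j)%N /\ a p.1 p.2 != 0 /\ b (j - p.1)%N (mon_sub m p.2) != 0.
Proof.
move=> /fsum_nz [p [/= Hp]]; rewrite mulf_eq0 negb_or => /andP [h1 h2].
by exists p.
Qed.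

Lemma NPz_mul a b z1 z2 : NPz a z1 -> NPz b z2 -> NPz (ser_mul a b) (z1 + z2).
Proof.
move=> Ha Hb j m /ser_mul_nz [p [_ [h1 h2]]].
have := Ha _ _ h1; have := Hb _ _ h2; rewrite /mon_sub; lia.
Qed.

Lemma NPz_pow a z k : NPz a z -> NPz (ser_pow a k) (k%:Z * z).
Proof.
move=> Ha; elim: k => [|k IH]; first by rewrite mul0r; exact: NPz_one.
rewrite /ser_pow iterS -/(ser_pow a k).
apply: NPz_le; first exact: NPz_mul Ha IH.
rewrite -[k.+1]addn1 PoszD mulrDl mul1r addrC.
by [].
Qed.

Lemma NPz_mono z : NPz (ser_mono K X1 z) z.
Proof.
move=> j m; rewrite /ser_mono; case: (j == 0)%N; last by rewrite /= eqxx.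
case: (m =P mon_single X1 z) => [-> _|]; last by rewrite eqxx.
by rewrite /mon_single eqxx.
Qed.

Lemma NPz_big (s : seq var) (F : var -> ser) z :
  (forall x, x \in s -> NPz (F x) (if x == X1 then z else 0)) ->
  NPz (\big[(@ser_mul K n)/@ser_one K n]_(x <- s) F x) ((count_mem X1 s)%:Z * z).
Proof.
elim: s => [|x s IH] H; first by rewrite big_nil mul0r; exact: NPz_one.
rewrite big_cons; apply: NPz_le.
  apply: NPz_mul; first by apply: H; rewrite inE eqxx.
  by apply: IH => y ys; apply: H; rewrite inE ys orbT.
rewrite /= PoszD mulrDl; rewrite /pred1 /=; by case: (x == X1); rewrite ?mul1r ?mul0r.
Qed.


Local Notation V1 := (v1 n).
Local Notation e := (fun y : var => mon_single y 1).
Definition shift (m : mon) (y : var) : mon :=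
  mon_add m (mon_sub (mon_single y 1) (mon_single (nextvar y) 1)).

Lemma X1V1 : (X1 == V1) = false. Proof. by []. Qed.
Lemma V1X1 : (V1 == X1) = false. Proof. by []. Qed.
Lemma nextV1 (y : var) : (nextvar y == V1) = false.
Proof. by case: y => a k; rewrite /nextvar /= xpair_eqE andbF. Qed.
Lemma nextX1 (y : var) : (nextvar y == X1) = (y == V1).
Proof. by case: y => a k; rewrite /nextvar /= !xpair_eqE. Qed.
Lemma nextnext (y x : var) : (nextvar y == nextvar x) = (y == x).
Proof. by case: y => a k; case: x => b l; rewrite /nextvar /= !xpair_eqE. Qed.
Lemma nextself (y : var) : (nextvar y == y) = false.
Proof. case: y => a k; rewrite /nextvar /= xpair_eqE eqxx /=; apply/eqP; lia. Qed.

Lemma shiftE m y z : shift m y z =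
  m z + ((if z == y then 1 else 0) - (if z == nextvar y then 1 else 0)).
Proof. by []. Qed.

Lemma intr_nz (k : int) : (k%:~R : K) != 0 -> k != 0.
Proof. by apply: contra => /eqP ->. Qed.

Definition Img (a : ser) (x : var) :=
  (forall m, a 0%N m = (m == e x)%:R) /\
  (forall j m, (0 < j)%N -> a j m != 0 -> m X1 <= 0 /\ m V1 = 0).


Lemma D_Img a x : Img a x -> Img (ser_D a) (nextvar x).
Proof.
move=> [H0 H1]; split.
- move=> m.
  have claim : forall y, (m y + 1)%:~R * a 0%N (shift m y) != 0 ->
      y = x /\ m = e (nextvar x).
    move=> y; rewrite H0 mulf_eq0 negb_or => /andP [/intr_nz hy].
    case: (shift m y =P e x) => [hs _|]; last by rewrite eqxx.
    have hy' := congr1 (fun f => f y) hs; rewrite /= shiftE eqxx in hy'.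
    rewrite eq_sym nextself /mon_single in hy'.
    case yx: (y == x); rewrite yx in hy'; last by move: hy; rewrite -hy'; lia.
    move/eqP: yx => yx; subst y; split => //; apply: funext => z.
    have := congr1 (fun f => f z) hs; rewrite /= shiftE /mon_single.
    by case: (z == x); case: (z == nextvar x); lia.
  rewrite /ser_D; case: (m =P e (nextvar x)) => [me|mne].
  + rewrite -(fsbig_widen [set x]) //; last first.
      move=> y [_ /= ynx]; apply/eqP; apply: contrapT => /negP hne.
      by have [] := claim y hne.
    rewrite fsbig_set1 H0.
    have -> : shift m x == e x.
      apply/eqP; apply: funext => z; rewrite shiftE me /mon_single.
      by case: (z == x); case: (z == nextvar x); lia.
    by rewrite me /mon_single (eq_sym x) nextself add0r /= mulr1.

  + rewrite fsbig1 //.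
    move=> y _; apply/eqP; apply: contrapT => /negP hne.
    by have [_ ] := claim y hne.
- move=> j m jpos /fsum_nz [y [_]]; rewrite mulf_eq0 negb_or => /andP [/intr_nz hy ha].
  have [h1 h2] := H1 _ _ jpos ha; rewrite /mon_add /mon_sub /mon_single in h1 h2 hy.
  case yV: (y == V1).
    move/eqP: yV => yV; subst y.
    by move: h2 hy; rewrite eqxx eq_sym nextV1; lia.
  move: h1 h2; rewrite (eq_sym X1 (nextvar y)) nextX1 yV (eq_sym V1 y) yV (eq_sym V1 (nextvar y)) nextV1.
  by case: (X1 == y) => h1 h2; split; lia.
Qed.


Lemma Img_pol a x : Img a x -> Img (pol a) x.
Proof.
move=> [H0 H1]; split.
- move=> m; rewrite /pol H0; case: (m =P e x) => [->|_]; last by case: ifP.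
  by rewrite /mon_single; case: (X1 == x).
- move=> j m jpos; rewrite /pol; case: ifP => _; last by rewrite eqxx.
  exact: H1.
Qed.

Lemma pol_D a x : Img a x -> pol (ser_D a) = ser_D (pol a).
Proof.
move=> [H0 H1]; apply: funext => j; apply: funext => m; rewrite /pol /ser_D.
case: ifP => hm.
- apply: eq_fsbigr => y _; case: ifP => hM //; rewrite mulr0.
  case yV: (y == V1); last first.
    move/negbT: hM; rewrite /mon_add /mon_sub /mon_single.
    rewrite (eq_sym X1 (nextvar y)) nextX1 yV.
    by case: (X1 == y); move: hm; lia.
  move/eqP: yV => yV; subst y.
  case: j H0 H1 => [|j] H0 H1.
    rewrite H0; case: eqP => [hMe|_]; last by rewrite mulr0.
    by move: hM; rewrite hMe /mon_single; case: (X1 == x).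
  have [->|haz] := eqVneq (a j.+1 (mon_add m (mon_sub (mon_single V1 1)
        (mon_single (nextvar V1) 1)))) 0; first by rewrite mulr0.
  have [_ h2] := H1 _ _ (ltn0Sn j) haz.
  move: h2; rewrite /mon_add /mon_sub /mon_single eqxx (eq_sym V1 (nextvar V1)) nextV1.
  move=> h2; have h3 : m V1 + 1 = 0 by lia.
  by rewrite h3 mul0r.
- rewrite fsbig1 // => y _; case: ifP => hM; last by rewrite mulr0.
  move: hM; rewrite /mon_add /mon_sub /mon_single.
  case yX: (X1 == y).
    move/eqP: yX => yX; subst y.
    rewrite (eq_sym X1 (nextvar X1)) nextX1 X1V1 => hM.
    have -> : m X1 + 1 = 0 by move/negbT: hm; lia.
    by rewrite mul0r.
  by case: (X1 == nextvar y); move/negbT: hm; lia.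
Qed.

Lemma Img_img (u : 'I_n.+1 -> ser) x : (forall al, Img (u al) (al, 0%N)) -> Img (img u x) x.
Proof.
move=> Hu; case: x => al k; elim: k => [|k IH]; first exact: Hu.
exact: (D_Img IH).
Qed.

Lemma pol_img (u : 'I_n.+1 -> ser) x : (forall al, Img (u al) (al, 0%N)) ->
  pol (img u x) = img (miura_pol u) x.
Proof.
move=> Hu; case: x => al k; elim: k => [|k IH]; first by [].
have e1 : img u (al, k.+1) = ser_D (img u (al, k)) by [].
rewrite e1 (pol_D (@Img_img u (al,k) Hu)) IH.
by [].
Qed.


Lemma pol_one : pol (@ser_one K n) = @ser_one K n.
Proof.
apply: funext => j; apply: funext => m; rewrite /pol; case: ifP => // h.
rewrite /ser_one; case: (m =P @mon0 n) => [me|]; last by rewrite andbF.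
by move: h; rewrite me /mon0 lexx.
Qed.

Lemma pol_mul a b : NPz a 0 -> NPz b 0 -> pol (ser_mul a b) = ser_mul (pol a) (pol b).
Proof.
move=> Ha Hb; apply: funext => j; apply: funext => m; rewrite /pol /ser_mul.
case: ifP => hm.
- apply: eq_fsbigr => p _.
  case: ifP => h1; case: ifP => h2 //; rewrite ?mul0r ?mulr0.
  + have [->|ha] := eqVneq (a p.1 p.2) 0; first by rewrite mul0r.
    by have := Ha _ _ ha; move/negbT: h2; rewrite /mon_sub; lia.
  + have [->|hb] := eqVneq (b (j - p.1)%N (mon_sub m p.2)) 0; first by rewrite mulr0.
    by have := Hb _ _ hb; move/negbT: h1; rewrite /mon_sub; lia.
  + have [->|hb] := eqVneq (b (j - p.1)%N (mon_sub m p.2)) 0; first by rewrite mulr0.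
    by have := Hb _ _ hb; move/negbT: h1; rewrite /mon_sub; lia.
- rewrite fsbig1 // => p _.
  case: ifP => h1; case: ifP => h2 //; rewrite ?mul0r ?mulr0 //.
  by move: h1 h2; move/negbT: hm; rewrite /mon_sub; lia.
Qed.

Lemma pol_pow a k : NPz a 0 -> pol (ser_pow a k) = ser_pow (pol a) k.
Proof.
move=> Ha; elim: k => [|k IH]; first exact: pol_one.
rewrite /ser_pow !iterS -!/(ser_pow _ k) pol_mul ?IH //.
by have := NPz_pow (k:=k) Ha; rewrite mulr0.
Qed.

Lemma Img_NP0 a x : Img a x -> x != X1 -> NPz a 0.
Proof.
move=> [H0 H1] hx j m; case: j => [|j].
  rewrite H0; case: (m =P e x) => [->|]; last by rewrite eqxx.
  by move=> _; rewrite /mon_single; case: eqP => // ex; move: hx; rewrite -ex eqxx.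
by move/(H1 _ _ (ltn0Sn j)) => [].
Qed.

Lemma Img_sub a : Img a X1 -> NPz (ser_sub a (ser_mono K X1 1)) 0.
Proof.
move=> [H0 H1] j m; rewrite /ser_sub /ser_mono; case: j => [|j].
  by rewrite H0 /= subrr eqxx.
by rewrite /= subr0 => /(H1 _ _ (ltn0Sn j)) [].
Qed.

Lemma NPz_inv a : NPz (ser_sub a (ser_mono K X1 1)) 0 -> NPz (inv_v1x a) (-1).
Proof.
move=> Ha j m hnz; apply: contrapT => H; move/eqP: hnz; apply.
apply: big1 => k _; apply/eqP; apply: contrapT => /negP hk; apply: H.
move: hk; rewrite mulf_eq0 negb_or => /andP [_ hk].
have := NPz_mul (NPz_mono (z:=- (k.+1)%:Z)) (NPz_pow (k:=k) Ha) hk.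
rewrite mulr0 addr0; lia.
Qed.

Lemma NPz_ipow_neg a k : NPz (ser_sub a (ser_mono K X1 1)) 0 ->
  NPz (ser_ipow a (Negz k)) (Negz k).
Proof.
move=> Ha; have := NPz_pow (k:=k.+1) (NPz_inv Ha).
by rewrite NegzE mulrN1.
Qed.

Definition P0 (a : ser) := forall m, a 0%N m != 0 -> forall z, 0 <= m z.
Definition P0p (a : ser) := forall m, a 0%N m != 0 -> (forall z, 0 <= m z) /\ m <> @mon0 n.

Lemma ser_mul_nz0 (a b : ser) m : ser_mul a b 0%N m != 0 ->
  exists p : mon, a 0%N p != 0 /\ b 0%N (mon_sub m p) != 0.
Proof.
move=> /ser_mul_nz [[p1 p2] /= [hp [h1 h2]]].
by move: hp h1 h2; rewrite leqn0 => /eqP ->; exists p2.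
Qed.

Lemma P0_one : P0 (@ser_one K n).
Proof.
move=> m; rewrite /ser_one /=; case: (m =P @mon0 n) => [->|]; last by rewrite eqxx.
by move=> _ z; rewrite /mon0.
Qed.

Lemma P0_mul a b : P0 a -> P0 b -> P0 (ser_mul a b).
Proof.
move=> Ha Hb m /ser_mul_nz0 [p [h1 h2]] z.
by have := Ha _ h1 z; have := Hb _ h2 z; rewrite /mon_sub; lia.
Qed.

Lemma P0p_mul a b : P0p a -> P0 b -> P0p (ser_mul a b).
Proof.
move=> Ha Hb m /ser_mul_nz0 [p [h1 h2]].
have [Hp1 Hp2] := Ha _ h1; have Hq := Hb _ h2.
split.
  by move=> z; have := Hp1 z; have := Hq z; rewrite /mon_sub; lia.
move=> me; apply: Hp2; apply: funext => z.
by have := Hp1 z; have := Hq z; rewrite /mon_sub me /mon0; lia.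
Qed.

Lemma P0p_P0 a : P0p a -> P0 a.
Proof. by move=> H m /H []. Qed.

Lemma Img_P0p a x : Img a x -> P0p a.
Proof.
move=> [H0 _] m; rewrite H0; case: (m =P e x) => [->|]; last by rewrite eqxx.
move=> _; split; first by move=> z; rewrite /mon_single; case: (z == x).
by move/(congr1 (fun f => f x)); rewrite /mon_single eqxx /mon0.
Qed.

Lemma P0p_pow a k : P0p a -> P0p (ser_pow a k.+1).
Proof.
move=> Ha; rewrite /ser_pow iterS -/(ser_pow a k); apply: P0p_mul => //.
elim: k => [|k IH]; first exact: P0_one.
by rewrite /ser_pow iterS -/(ser_pow a k); apply: P0_mul => //; exact: P0p_P0.
Qed.

Lemma P0p_neq1 a : P0p a -> a <> @ser_one K n.
Proof.
move=> Ha ea; have : a 0%N (@mon0 n) != 0 by rewrite ea /ser_one !eqxx oner_eq0.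
by move/Ha => [_].
Qed.


Lemma adm_of (u : 'I_n.+1 -> ser) al j m :
  rat_miura u -> u al j m != 0 -> admissible m.
Proof.
move=> Hm; have [H0 Hart _] := Hm al; case: j => [|j].
  rewrite H0; case: (m =P e (al, 0%N)) => [->|]; last by rewrite eqxx.
  move=> _; split.
    apply: sub_finite_set (finite_set1 (al, 0%N)) => z /=.
    by rewrite /mon_single; case: (z =P (al, 0%N)) => [//|_]; rewrite eqxx.
  by move=> z _; rewrite /mon_single; case: (z == _).
by move=> /(Hart j m) [].
Qed.

Lemma addsub_single (m : mon) x : mon_add (mon_sub m (e x)) (e x) = m.
Proof. by apply: funext => z; rewrite /mon_add /mon_sub subrK. Qed.

Lemma np_hyp (u : 'I_n.+1 -> ser) al :
  dpart X1 (pol (u al)) = @ser_zero K n -> forall j m, u al j m != 0 -> m X1 <= 0.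
Proof.
move=> Hp j m hu; apply: contrapT => /negP; rewrite -ltNge => hlt.
have := congr1 (fun f => f j (mon_sub m (e X1))) Hp.
rewrite /= /dpart /pol /ser_zero addsub_single.
have -> : mon_sub m (e X1) X1 + 1 = m X1 by rewrite /mon_sub /mon_single eqxx subrK.
rewrite (ltW hlt) => /eqP; rewrite mulf_eq0 (negbTE hu) orbF intr_eq0.
by move/eqP => h; move: hlt; rewrite h.
Qed.

Lemma Img_of_hyp (u : 'I_n.+1 -> ser) : rat_miura u ->
  (forall al, dpart V1 (u al) = @kdelta1 K n al) ->
  (forall al, dpart X1 (pol (u al)) = @ser_zero K n) ->
  forall al, Img (u al) (al, 0%N).
Proof.
move=> Hm Hd Hp al; have [H0 Hart _] := Hm al; split; first exact: H0.
move=> j m jpos hu; split; first exact: np_hyp (Hp al) _ _ hu.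
have hge : 0 <= m V1.
  case: j jpos hu => [//|j] _ hu.
  by have [[_ Hn] _] := Hart j m hu; apply: Hn.
suff : m V1 <= 0 by move: hge; lia.
apply: contrapT => /negP; rewrite -ltNge => hlt.
have := congr1 (fun f => f j (mon_sub m (e V1))) (Hd al).
rewrite /= /dpart addsub_single.
have -> : mon_sub m (e V1) V1 + 1 = m V1 by rewrite /mon_sub /mon_single eqxx subrK.
have -> : kdelta1 K al j (mon_sub m (e V1)) = 0.
  rewrite /kdelta1; case: ifP => _ //.
  by rewrite /ser_one; case: j jpos hu.
move/eqP; rewrite mulf_eq0 (negbTE hu) orbF intr_eq0.
by move/eqP => h; move: hlt; rewrite h.
Qed.


Local Notation one := (@ser_one K n).

Lemma ipow0 (a : ser) : ser_ipow a 0 = one. Proof. by []. Qed.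

Lemma img_mon_neg (u : 'I_n.+1 -> ser) (e0 : mon) :
  (forall al, Img (u al) (al, 0%N)) -> admissible e0 -> e0 X1 < 0 ->
  NPz (img_mon u e0) (e0 X1).
Proof.
move=> Hu [fin nn] neg; rewrite /img_mon.
set F := fun x => ser_ipow (img u x) (e0 x).
have hF : forall x, F x != one -> e0 x != 0.
  move=> x; apply: contra => /eqP h0; by rewrite /F h0.
have finF : finite_set ([set: var] `&` F @^-1` [set~ one]).
  apply: sub_finite_set fin => x [_ /= hx]; apply: hF; exact/eqP.
have NX1 : NPz (F X1) (e0 X1).
  rewrite /F; case E: (e0 X1) => [k|k]; first by move: neg; rewrite E.
  apply: NPz_ipow_neg; apply: Img_sub; exact: Img_img.
have X1in : X1 \in finite_support one [set: var] F.
  rewrite in_finite_support // inE; split => //= eF.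
  have : F X1 0%N (@mon0 n) != 0 by rewrite eF /ser_one !eqxx oner_eq0.
  by move/NX1; rewrite /mon0; move: neg; lia.
apply: NPz_le.
  apply: NPz_big => x _; case: (x =P X1) => [->|/eqP hx]; first exact: NX1.
  have := nn x hx; rewrite /F; case: (e0 x) => [k|k] // _.
  by have := NPz_pow (k:=k) (Img_NP0 (Img_img x Hu) hx); rewrite mulr0.
rewrite count_uniq_mem //. have h1 : (X1 \in (finite_support one [set: var] F : seq var)) = true by exact: X1in.
  by rewrite h1 mul1r.
exact: (finite_support_uniq one [set: var] F).
Qed.

Lemma supp_eq (u : 'I_n.+1 -> ser) (e0 : mon) :
  (forall al, Img (u al) (al, 0%N)) -> admissible e0 -> e0 X1 = 0 ->
  (fun x => ser_ipow (img u x) (e0 x)) @^-1` [set~ one] = [set x | e0 x != 0].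
Proof.
move=> Hu [fin nn] z0; apply/seteqP; split => x /=.
  by move=> hF; apply/eqP => h0; apply: hF; rewrite h0.
move=> hx; have xX : x != X1 by apply: contra hx => /eqP ->; rewrite z0.
have := nn x xX; case E: (e0 x) => [k|k] // _.
case: k E hx => [|k] E hx; first by rewrite E in hx.
apply: (@P0p_neq1 (ser_pow (img u x) k.+1)); apply: P0p_pow; exact: (Img_P0p (Img_img x Hu)).
Qed.

Lemma img_mon_pol (u : 'I_n.+1 -> ser) (e0 : mon) :
  (forall al, Img (u al) (al, 0%N)) -> admissible e0 -> e0 X1 = 0 ->
  pol (img_mon u e0) = img_mon (miura_pol u) e0.
Proof.
move=> Hu adm z0.
have Hpu : forall al, Img (miura_pol u al) (al, 0%N) by move=> al; exact: Img_pol.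
rewrite /img_mon.
have es : finite_support one [set: var] (fun x => ser_ipow (img (miura_pol u) x) (e0 x)) =
          finite_support one [set: var] (fun x => ser_ipow (img u x) (e0 x)).
  by rewrite /finite_support (supp_eq Hu adm z0) (supp_eq Hpu adm z0).
rewrite es; move: (finite_support one [set: var] _) => s.
suff : NPz (\big[(@ser_mul K n)/one]_(x <- s) ser_ipow (img u x) (e0 x)) 0 /\
       pol (\big[(@ser_mul K n)/one]_(x <- s) ser_ipow (img u x) (e0 x)) =
       \big[(@ser_mul K n)/one]_(x <- s) ser_ipow (img (miura_pol u) x) (e0 x)
  by case.
apply: (big_ind2 (fun a b => NPz a 0 /\ pol a = b)).
- by split; [exact: NPz_one | exact: pol_one].
- move=> a1 b1 a2 b2 [h1 e1] [h2 e2]; split.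
    by have := NPz_mul h1 h2; rewrite addr0.
  by rewrite pol_mul // e1 e2.
- move=> x _; case: (x =P X1) => [->|/eqP hx]; first by rewrite z0; split; [exact: NPz_one | exact: pol_one].
  have := adm.2 x hx; case: (e0 x) => [k|k] // _.
  have hn := Img_NP0 (Img_img x Hu) hx; split.
    by have := NPz_pow (k:=k) hn; rewrite mulr0.
  by rewrite pol_pow // pol_img.
Qed.

End Aux.

Theorem lemma7p4 (R : realType) (n : nat) (u w : 'I_n.+1 -> ser R[i] n) :
  rat_miura u -> rat_miura w ->
  (forall alpha, dpart (v1 n) (u alpha) = @kdelta1 R[i] n alpha) ->
  (forall alpha, dpart (v1x n) (pol (u alpha)) = @ser_zero R[i] n) ->
  (forall alpha, dpart (v1 n) (w alpha) = @kdelta1 R[i] n alpha) ->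
  (forall alpha, dpart (v1x n) (pol (w alpha)) = @ser_zero R[i] n) ->
  miura_pol (miura_comp u w) = miura_comp (miura_pol u) (miura_pol w).
Proof.
move=> Hmu Hmw Hdu Hpu Hdw Hpw.
have Iu := Img_of_hyp Hmu Hdu Hpu.
apply: funext => al; apply: funext => j; apply: funext => m.
have term : forall p : nat * mon n,
    pol (w al) p.1 p.2 * img_mon (miura_pol u) p.2 (j - p.1)%N m =
    if 0 <= m (v1x n) then w al p.1 p.2 * img_mon u p.2 (j - p.1)%N m else 0.
  case=> p1 p2 /=.
  have [hw|hw] := eqVneq (w al p1 p2) 0.
    by rewrite /pol hw; case: ifP; case: ifP; rewrite ?mul0r.
  have adm := adm_of Hmw hw.
  have np := np_hyp (Hpw al) hw.
  case: (ltrP (p2 (v1x n)) 0) => hp.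
    rewrite /pol (lt_geF hp) mul0r.
    case: ifP => hm //.
    suff -> : img_mon u p2 (j - p1)%N m = 0 by rewrite mulr0.
    apply/eqP; apply: contrapT => /negP h.
    by have := img_mon_neg Iu adm hp h; move: hm; move: hp; lia.
  have hz : p2 (v1x n) = 0 by apply/eqP; rewrite eq_le np hp.
  rewrite -(img_mon_pol Iu adm hz) /pol hp.
  by case: ifP; rewrite ?mulr0.
change ((if 0 <= m (v1x n) then subst u (w al) j m else 0) =
        subst (miura_pol u) (pol (w al)) j m).
rewrite /subst; case: ifP => hm.
  by apply: eq_fsbigr => p _; rewrite term hm.
by rewrite fsbig1 // => p _; rewrite term hm.
Qed.
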